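(* Let $p\in k^\times$, $A_p=k\langle x_1,x_2\rangle/(x_2x_1-px_1x_2)$, and $K$ a Hopf algebra with bijective antipode $S$ such that $A_p$ is a right $K$-comodule algebra via $\rho(x_i)=x_1\otimes y_{1i}+x_2\otimes y_{2i}$, with homological codeterminant ${\sf D}$. Then $$S(y_{11})=y_{22}{\sf D}^{-1},\quad S(y_{12})=-p\,y_{12}{\sf D}^{-1},\quad S(y_{21})=-p^{-1}y_{21}{\sf D}^{-1},\quad S(y_{22})=y_{11}{\sf D}^{-1}.$$
   Context: The Ext-algebra of $A_p$ is $E=k\langle x_1^*,x_2^*\rangle/(x_2^*x_1^*+p^{-1}x_1^*x_2^*,(x_1^* )^2,(x_2^* )^2)$, a left $K$-comodule algebra via $\rho^!(x_i^* )=\sum_{s=1}^2y_{is}\otimes x_s^*$. The homological codeterminant is the grouplike ${\sf D}\in K$ with $\rho^!(x_1^*x_2^* )={\sf D}\otimes x_1^*x_2^*$. *)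

(* Defs.v *)
(* Tensors of A (x) B are represented by finite lists of pure tensors
   s : seq (A * B), standing for \sum_(u <- s) u.1 (x) u.2; two such lists
   denote the same tensor iff they agree under every bilinear map (the
   universal property of the tensor product). *)
From HB Require Import structures.
From mathcomp Require Import all_boot all_order all_algebra.
Set Implicit Arguments. Unset Strict Implicit. Unset Printing Implicit Defensive.
Import Order.TTheory GRing.Theory Num.Theory.
Local Open Scope ring_scope.

Section Defs.
Variable k : fieldType.

Definition bilin (A B W : lmodType k) (f : A -> B -> W) : Prop :=
  (forall (c : k) a a' b, f (c *: a + a') b = c *: f a b + f a' b) /\
  (forall (c : k) a b b', f a (c *: b + b') = c *: f a b + f a b').

Definition trilin (A B C W : lmodType k) (f : A -> B -> C -> W) : Prop :=
  (forall (c : k) a a' b d, f (c *: a + a') b d = c *: f a b d + f a' b d) /\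
  (forall (c : k) a b b' d, f a (c *: b + b') d = c *: f a b d + f a b' d) /\
  (forall (c : k) a b d d', f a b (c *: d + d') = c *: f a b d + f a b d').

Definition teq2 (A B : lmodType k) (s t : seq (A * B)) : Prop :=
  forall (W : lmodType k) (f : A -> B -> W), bilin f ->
    \sum_(u <- s) f u.1 u.2 = \sum_(u <- t) f u.1 u.2.

Definition teq3 (A B C : lmodType k) (s t : seq (A * B * C)) : Prop :=
  forall (W : lmodType k) (f : A -> B -> C -> W), trilin f ->
    \sum_(u <- s) f u.1.1 u.1.2 u.2 = \sum_(u <- t) f u.1.1 u.1.2 u.2.

Definition alg_hom (A B : algType k) (f : A -> B) : Prop :=
  (forall (c : k) a a', f (c *: a + a') = c *: f a + f a') /\
  (forall a a', f (a * a') = f a * f a') /\ f 1 = 1.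

Definition is_hopf (K : algType k) (comul : K -> seq (K * K)) (eps : K -> k)
    (S : K -> K) : Prop :=
  (
   (forall (c : k) x y, teq2 (comul (c *: x + y))
       ([seq (c *: u.1, u.2) | u <- comul x] ++ comul y)) /\
   (forall x y, teq2 (comul (x * y))
       [seq (u.1 * v.1, u.2 * v.2) | u <- comul x, v <- comul y]) /\
   teq2 (comul 1) [:: (1, 1)]) /\
  (forall x, teq3 [seq (v.1, v.2, u.2) | u <- comul x, v <- comul u.1]
                  [seq (u.1, v.1, v.2) | u <- comul x, v <- comul u.2]) /\
  ((forall (c : k) x y, eps (c *: x + y) = c * eps x + eps y) /\
   (forall x y, eps (x * y) = eps x * eps y) /\ eps 1 = 1) /\
  (forall x, \sum_(u <- comul x) eps u.1 *: u.2 = x /\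
             \sum_(u <- comul x) eps u.2 *: u.1 = x) /\
  (forall (c : k) x y, S (c *: x + y) = c *: S x + S y) /\
  (forall x, \sum_(u <- comul x) S u.1 * u.2 = eps x *: 1 /\
             \sum_(u <- comul x) u.1 * S u.2 = eps x *: 1).

Definition right_comod_alg (K : algType k) (comul : K -> seq (K * K))
    (eps : K -> k) (A : algType k) (rho : A -> seq (A * K)) : Prop :=
  [/\ (forall (c : k) a b, teq2 (rho (c *: a + b))
          ([seq (c *: u.1, u.2) | u <- rho a] ++ rho b)),
      (forall a b, teq2 (rho (a * b))
          [seq (u.1 * v.1, u.2 * v.2) | u <- rho a, v <- rho b]),
      teq2 (rho 1) [:: (1, 1)],
      (forall a, teq3 [seq (v.1, v.2, u.2) | u <- rho a, v <- rho u.1]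
                      [seq (u.1, v.1, v.2) | u <- rho a, v <- comul u.2]) &
      (forall a, \sum_(u <- rho a) eps u.2 *: u.1 = a)].

Definition left_comod_alg (K : algType k) (comul : K -> seq (K * K))
    (eps : K -> k) (E : algType k) (lam : E -> seq (K * E)) : Prop :=
  [/\ (forall (c : k) a b, teq2 (lam (c *: a + b))
          ([seq (u.1, c *: u.2) | u <- lam a] ++ lam b)),
      (forall a b, teq2 (lam (a * b))
          [seq (u.1 * v.1, u.2 * v.2) | u <- lam a, v <- lam b]),
      teq2 (lam 1) [:: (1, 1)],
      (forall a, teq3 [seq (v.1, v.2, u.2) | u <- lam a, v <- comul u.1]
                      [seq (u.1, v.1, v.2) | u <- lam a, v <- lam u.2]) &
      (forall a, \sum_(u <- lam a) eps u.1 *: u.2 = a)].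

Definition is_Ap (p : k) (A : algType k) (x1 x2 : A) : Prop :=
  x2 * x1 = p *: (x1 * x2) /\
  forall (B : algType k) (b1 b2 : B), b2 * b1 = p *: (b1 * b2) ->
    exists f : A -> B, [/\ alg_hom f, f x1 = b1, f x2 = b2 &
      forall g : A -> B, alg_hom g -> g x1 = b1 -> g x2 = b2 -> g =1 f].

Definition is_Ext_Ap (p : k) (E : algType k) (z1 z2 : E) : Prop :=
  [/\ z2 * z1 + p^-1 *: (z1 * z2) = 0, z1 * z1 = 0, z2 * z2 = 0 &
  forall (B : algType k) (b1 b2 : B),
    b2 * b1 + p^-1 *: (b1 * b2) = 0 -> b1 * b1 = 0 -> b2 * b2 = 0 ->
    exists f : E -> B, [/\ alg_hom f, f z1 = b1, f z2 = b2 &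
      forall g : E -> B, alg_hom g -> g z1 = b1 -> g z2 = b2 -> g =1 f]].

Definition grouplike (K : algType k) (comul : K -> seq (K * K))
    (eps : K -> k) (g : K) : Prop :=
  teq2 (comul g) [:: (g, g)] /\ eps g = 1.

(* D is the homological codeterminant of the coaction with matrix (y_ij):
   the Ext-algebra E of A_p is a left K-comodule algebra via
   rho^!(z_i) = y_i1 (x) z_1 + y_i2 (x) z_2, and D is the grouplike with
   rho^!(z_1 z_2) = D (x) z_1 z_2. *)
Definition hom_codet (p : k) (K : algType k) (comul : K -> seq (K * K))
    (eps : K -> k) (y11 y12 y21 y22 D : K) : Prop :=
  exists (E : algType k) (z1 z2 : E) (lam : E -> seq (K * E)),
    [/\ is_Ext_Ap p z1 z2 /\ left_comod_alg comul eps lam,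
        teq2 (lam z1) [:: (y11, z1); (y12, z2)],
        teq2 (lam z2) [:: (y21, z1); (y22, z2)],
        teq2 (lam (z1 * z2)) [:: (D, z1 * z2)] &
        grouplike comul eps D].

End Defs.

(* Main.v *)
Require Import Defs.
From HB Require Import structures.
From mathcomp Require Import all_boot all_order all_algebra.
Import GRing.Theory.
Local Open Scope ring_scope.
Set Implicit Arguments. Unset Strict Implicit. Unset Printing Implicit Defensive.

Section Aux.
Variable k : fieldType.

Lemma bl_addl (A B W : lmodType k) (f : A -> B -> W) : bilin f ->
  forall a a' b, f (a + a') b = f a b + f a' b.
Proof. by move=> hf a a' b; have := hf.1 1 a a' b; rewrite !scale1r. Qed.
Lemma bl_addr (A B W : lmodType k) (f : A -> B -> W) : bilin f ->
  forall a b b', f a (b + b') = f a b + f a b'.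
Proof. by move=> hf a b b'; have := hf.2 1 a b b'; rewrite !scale1r. Qed.
Lemma bl_0l (A B W : lmodType k) (f : A -> B -> W) : bilin f ->
  forall b, f 0 b = 0.
Proof.
move=> hf b; have H := bl_addl hf 0 0 b; rewrite addr0 in H.
have : f 0 b + f 0 b = f 0 b + 0 by rewrite addr0 -H.
by move/addrI.
Qed.
Lemma bl_0r (A B W : lmodType k) (f : A -> B -> W) : bilin f ->
  forall a, f a 0 = 0.
Proof.
move=> hf a; have H := bl_addr hf a 0 0; rewrite addr0 in H.
have : f a 0 + f a 0 = f a 0 + 0 by rewrite addr0 -H.
by move/addrI.
Qed.
Lemma bl_scalel (A B W : lmodType k) (f : A -> B -> W) : bilin f ->
  forall c a b, f (c *: a) b = c *: f a b.
Proof. by move=> hf c a b; have := hf.1 c a 0 b; rewrite addr0 bl_0l // addr0. Qed.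
Lemma bl_scaler (A B W : lmodType k) (f : A -> B -> W) : bilin f ->
  forall c a b, f a (c *: b) = c *: f a b.
Proof. by move=> hf c a b; have := hf.2 c a b 0; rewrite addr0 bl_0r // addr0. Qed.

Definition flin (E : lmodType k) (phi : E -> k) :=
  forall c a b, phi (c *: a + b) = c * phi a + phi b.

Lemma fl0 (E : lmodType k) (phi : E -> k) : flin phi -> phi 0 = 0.
Proof.
move=> h; have H := h 1 0 0; rewrite scale1r addr0 mul1r in H.
have : phi 0 + phi 0 = phi 0 + 0 by rewrite addr0 -H.
by move/addrI.
Qed.
Lemma flZ (E : lmodType k) (phi : E -> k) : flin phi -> forall c a, phi (c *: a) = c * phi a.
Proof. by move=> h c a; have := h c a 0; rewrite addr0 fl0 // addr0. Qed.
Lemma flD (E : lmodType k) (phi : E -> k) : flin phi -> forall a b, phi (a + b) = phi a + phi b.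
Proof. by move=> h a b; have := h 1 a b; rewrite scale1r mul1r. Qed.
Lemma flN (E : lmodType k) (phi : E -> k) : flin phi -> forall a, phi (- a) = - phi a.
Proof. by move=> h a; rewrite -scaleN1r flZ // mulN1r. Qed.
Lemma flsum (E : lmodType k) (phi : E -> k) (I : Type) (s : seq I) (G : I -> E) :
  flin phi -> phi (\sum_(u <- s) G u) = \sum_(u <- s) phi (G u).
Proof.
move=> h; elim: s => [|x s IH]; first by rewrite !big_nil fl0.
by rewrite !big_cons flD // IH.
Qed.

Lemma bil_phi (A B : lmodType k) (phi : B -> k) : flin phi ->
  bilin (fun (a : A) (b : B) => phi b *: a).
Proof.
move=> h; split=> c a a' b.
  by rewrite scalerDr !scalerA mulrC.
by rewrite h scalerDl scalerA.
Qed.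

Lemma lamlin (K E W : lmodType k) (lam : E -> seq (K * E))
  (hl : forall (c : k) a b, teq2 (lam (c *: a + b))
          ([seq (u.1, c *: u.2) | u <- lam a] ++ lam b))
  (f : K -> E -> W) (hf : bilin f) c a b :
  \sum_(u <- lam (c *: a + b)) f u.1 u.2 =
  c *: \sum_(u <- lam a) f u.1 u.2 + \sum_(u <- lam b) f u.1 u.2.
Proof.
rewrite (hl c a b W f hf) big_cat big_map /= scaler_sumr.
by congr (_ + _); apply: eq_bigr => u _; rewrite bl_scaler.
Qed.

Lemma lamlin0 (K E W : lmodType k) (lam : E -> seq (K * E))
  (hl : forall (c : k) a b, teq2 (lam (c *: a + b))
          ([seq (u.1, c *: u.2) | u <- lam a] ++ lam b))
  (f : K -> E -> W) (hf : bilin f) :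
  \sum_(u <- lam 0) f u.1 u.2 = 0.
Proof.
have H := lamlin hl hf 1 0 0; rewrite !scale1r addr0 in H.
have : \sum_(u <- lam 0) f u.1 u.2 + \sum_(u <- lam 0) f u.1 u.2 =
       \sum_(u <- lam 0) f u.1 u.2 + 0 by rewrite addr0 -H.
by move/addrI.
Qed.

Lemma teq2_mul (A B : algType k) (s s' t t' : seq (A * B)) :
  teq2 s s' -> teq2 t t' ->
  teq2 [seq (u.1 * v.1, u.2 * v.2) | u <- s, v <- t]
       [seq (u.1 * v.1, u.2 * v.2) | u <- s', v <- t'].
Proof.
move=> hs ht W f hf; rewrite !big_allpairs_dep /=.
have e : forall u : A * B, \sum_(v <- t) f (u.1 * v.1) (u.2 * v.2) =
                          \sum_(v <- t') f (u.1 * v.1) (u.2 * v.2).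
  move=> u; apply: (ht W (fun b e => f (u.1 * b) (u.2 * e))).
  split=> c a a' b.
    by rewrite mulrDr -scalerAr hf.1.
  by rewrite mulrDr -scalerAr hf.2.
rewrite (eq_bigr _ (fun u _ => e u)).
apply: (hs W (fun a c => \sum_(v <- t') f (a * v.1) (c * v.2))).
split=> c a a' b.
  rewrite scaler_sumr -big_split; apply: eq_bigr => v _.
  by rewrite mulrDl -scalerAl hf.1.
rewrite scaler_sumr -big_split; apply: eq_bigr => v _.
by rewrite mulrDl -scalerAl hf.2.
Qed.

Lemma sum2 (A B W : lmodType k) (f : A -> B -> W) a1 b1 a2 b2 :
  \sum_(u <- [:: (a1, b1); (a2, b2)]) f u.1 u.2 = f a1 b1 + f a2 b2.
Proof. by rewrite !big_cons big_nil addr0. Qed.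

Lemma antipode_row (K E : algType k) (comul : K -> seq (K * K)) (eps : K -> k)
  (S : K -> K) (lam : E -> seq (K * E))
  (hSl : forall (c : k) x y, S (c *: x + y) = c *: S x + S y)
  (hant : forall x, \sum_(u <- comul x) S u.1 * u.2 = eps x *: 1)
  (hll : forall (c : k) a b, teq2 (lam (c *: a + b))
          ([seq (u.1, c *: u.2) | u <- lam a] ++ lam b))
  (hco : forall a, teq3 [seq (v.1, v.2, u.2) | u <- lam a, v <- comul u.1]
                      [seq (u.1, v.1, v.2) | u <- lam a, v <- lam u.2])
  (hcu : forall a, \sum_(u <- lam a) eps u.1 *: u.2 = a)
  (phi : E -> k) (hphi : flin phi)
  (z z1 z2 : E) (y1 y2 y11 y12 y21 y22 : K)
  (hz : teq2 (lam z) [:: (y1, z1); (y2, z2)])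
  (h1 : teq2 (lam z1) [:: (y11, z1); (y12, z2)])
  (h2 : teq2 (lam z2) [:: (y21, z1); (y22, z2)]) :
  phi z *: (1 : K) = phi z1 *: (S y1 * y11) + phi z2 *: (S y1 * y12)
                   + (phi z1 *: (S y2 * y21) + phi z2 *: (S y2 * y22)).
Proof.
pose f := fun (a b : K) (e : E) => phi e *: (S a * b).
have hf : trilin f.
  rewrite /f; split; [|split] => c a b b' d.
  - by rewrite hSl mulrDl -scalerAl scalerDr !scalerA (mulrC c).
  - by rewrite mulrDr -scalerAr scalerDr !scalerA (mulrC c).
  - by rewrite hphi scalerDl scalerA.
have H := hco z K f hf; rewrite !big_allpairs_dep /= in H.
have L : \sum_(u <- lam z) \sum_(v <- comul u.1) f v.1 v.2 u.2 = phi z *: 1.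
  rewrite /f.
  under eq_bigr => u _ do rewrite -scaler_sumr hant scalerA.
  rewrite -scaler_suml -{2}(hcu z) flsum //.
  by congr (_ *: _); apply: eq_bigr => u _; rewrite flZ // mulrC.
rewrite L in H; rewrite H.
pose h := fun (a : K) (e : E) => \sum_(v <- lam e) f a v.1 v.2.
have hb : forall a, bilin (fun b e => f a b e).
  move=> a; split=> c b b' d; [exact: hf.2.1 | exact: hf.2.2].
have hh : bilin h.
  split=> c a a' b.
    rewrite /h scaler_sumr -big_split; apply: eq_bigr => v _; exact: hf.1.
  exact: (lamlin hll (hb a)).
rewrite (hz K h hh) sum2 /h /=.
rewrite (h1 K _ (hb y1)) (h2 K _ (hb y2)) !big_cons !big_nil /f /= !addr0.
done.
Qed.

Lemma prod_rel (K E : algType k) (lam : E -> seq (K * E))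
  (hlm : forall a b, teq2 (lam (a * b))
          [seq (u.1 * v.1, u.2 * v.2) | u <- lam a, v <- lam b])
  (phi : E -> k) (hphi : flin phi) (za zb z1 z2 : E) (a1 a2 b1 b2 : K)
  (ha : teq2 (lam za) [:: (a1, z1); (a2, z2)])
  (hb : teq2 (lam zb) [:: (b1, z1); (b2, z2)]) :
  \sum_(u <- lam (za * zb)) phi u.2 *: u.1 =
  phi (z1 * z1) *: (a1 * b1) + phi (z1 * z2) *: (a1 * b2)
  + (phi (z2 * z1) *: (a2 * b1) + phi (z2 * z2) *: (a2 * b2)).
Proof.
have hf := @bil_phi K E phi hphi.
rewrite (hlm za zb K _ hf) (teq2_mul ha hb hf) big_allpairs_dep /= !big_cons !big_nil /=.
by rewrite !addr0.
Qed.

Lemma row_col (R : pzRingType) (T1 T2 y11 y12 y21 y22 Z1 Z2 d1 d2 c1 c2 : R) :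
  T1 * y11 + T2 * y21 = d1 -> T1 * y12 + T2 * y22 = d2 ->
  y11 * Z1 + y12 * Z2 = c1 -> y21 * Z1 + y22 * Z2 = c2 ->
  T1 * c1 + T2 * c2 = d1 * Z1 + d2 * Z2.
Proof.
move=> <- <- <- <-; rewrite !mulrDr !mulrDl !mulrA.
by rewrite addrACA.
Qed.

(* matrix model of the Ext algebra *)
Definition i0 : 'I_4 := @Ordinal 4 0 erefl.
Definition i1 : 'I_4 := @Ordinal 4 1 erefl.
Definition i2 : 'I_4 := @Ordinal 4 2 erefl.
Definition i3 : 'I_4 := @Ordinal 4 3 erefl.
Definition L1 : 'M[k]_4 := delta_mx i1 i0 + delta_mx i3 i2.
Definition L2 (q : k) : 'M[k]_4 := delta_mx i2 i0 - q *: delta_mx i3 i1.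
Lemma L11 : L1 * L1 = 0.
Proof. rewrite -mulmxE /L1 !(mulmxDl, mulmxDr) !mul_delta_mx_cond /=. rewrite !mulr0n. by rewrite !addr0. Qed.
Lemma L22 q : L2 q * L2 q = 0.
Proof. rewrite -mulmxE /L2 !(mulmxBl, mulmxBr) -?scalemxAl -?scalemxAr !mul_delta_mx_cond /= !mulr0n !scaler0. by rewrite !subr0. Qed.
Lemma L12 q : L1 * L2 q = delta_mx i3 i0.
Proof. rewrite -mulmxE /L1 /L2 !(mulmxBl, mulmxBr, mulmxDl,mulmxDr) -?scalemxAl -?scalemxAr !mul_delta_mx_cond /= !mulr0n ?mulr1n !scaler0. rewrite !subr0 !add0r. by []. Qed.
Lemma L21 q : L2 q * L1 + q *: (L1 * L2 q) = 0.
Proof. rewrite -mulmxE /L1 /L2 !(mulmxBl, mulmxBr, mulmxDl,mulmxDr) -?scalemxAl -?scalemxAr !mul_delta_mx_cond /= !mulr0n ?mulr1n !scaler0. rewrite !subr0 !add0r !addr0. by rewrite addrC subrr. Qed.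
Lemma Lent q : [/\ L1 i1 i0 = 1, L2 q i1 i0 = 0, L1 i2 i0 = 0,
   L2 q i2 i0 = 1 & (delta_mx i3 i0 : 'M[k]_4) i3 i0 = 1].
Proof. by rewrite /L1 /L2 !mxE /=; split; rewrite ?mulr0 ?subr0 ?addr0. Qed.

End Aux.

Theorem lemma5p2 (k : fieldType) (p : k) (hp : p != 0)
  (K : algType k) (comul : K -> seq (K * K)) (eps : K -> k) (S : K -> K)
  (hK : is_hopf comul eps S) (hS : bijective S)
  (A : algType k) (x1 x2 : A) (hA : is_Ap p x1 x2)
  (rho : A -> seq (A * K)) (y11 y12 y21 y22 : K)
  (hrho : right_comod_alg comul eps rho)
  (hx1 : teq2 (rho x1) [:: (x1, y11); (x2, y21)])
  (hx2 : teq2 (rho x2) [:: (x1, y12); (x2, y22)])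
  (D : K) (hD : hom_codet p comul eps y11 y12 y21 y22 D) :
  exists Dinv : K, (D * Dinv = 1 /\ Dinv * D = 1) /\
    [/\ S y11 = y22 * Dinv, S y12 = - (p *: (y12 * Dinv)),
    S y21 = - (p^-1 *: (y21 * Dinv)) & S y22 = y11 * Dinv].
Proof.
case: hK => [[hcl [hcm hc1]] [hcoa [[hel [hem he1]] [hcu [hSl hant]]]]].
case: hD => [E [z1 [z2 [lam [[hE hlamc] hl1 hl2 hl12 [hDg hDe]]]]]].
case: hE => [hz21 hz11 hz22 hEu].
case: hlamc => [hll hlm hl10 hlco hlcu].
set q := p^-1.
have pq : p * q = 1 by rewrite /q mulfV.
have [g [[glin [gmul g1]] gz1 gz2 _]] :=
  hEu _ (L1 k) (L2 q) (L21 q) (L11 k) (L22 q).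
pose phi (i : 'I_4) (e : E) := g e i i0.
have hphi : forall i, flin (phi i).
  by move=> i c a b; rewrite /phi glin !mxE.
have [e1 e2 e3 e4 e5] := Lent q.
have R := antipode_row hSl (fun x => (hant x).1) hll hlco hlcu.
have t11 := R _ (hphi i1) _ _ _ _ _ _ _ _ _ hl1 hl1 hl2.
have t12 := R _ (hphi i2) _ _ _ _ _ _ _ _ _ hl1 hl1 hl2.
have t21 := R _ (hphi i1) _ _ _ _ _ _ _ _ _ hl2 hl1 hl2.
have t22 := R _ (hphi i2) _ _ _ _ _ _ _ _ _ hl2 hl1 hl2.
rewrite /phi gz1 gz2 e1 e2 e3 e4 !scale1r !scale0r !addr0 !add0r in t11 t12 t21 t22.
have P := prod_rel hlm (hphi i3).
have f0 : phi i3 (z1 * z1) = 0 by rewrite hz11 fl0.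
have f3 : phi i3 (z2 * z2) = 0 by rewrite hz22 fl0.
have f1 : phi i3 (z1 * z2) = 1 by rewrite /phi gmul gz1 gz2 L12.
have f2 : phi i3 (z2 * z1) = - q.
  have -> : z2 * z1 = - (q *: (z1 * z2)).
    by apply/eqP; rewrite -addr_eq0 hz21.
  by rewrite flN // flZ // f1 mulr1.
have hbil := @bil_phi k K E (phi i3) (hphi i3).
have F0 := lamlin0 hll hbil.
have r1 := P _ _ _ _ _ _ _ _ hl1 hl1.
have r2 := P _ _ _ _ _ _ _ _ hl2 hl2.
have rD := P _ _ _ _ _ _ _ _ hl1 hl2.
have r3 := P _ _ _ _ _ _ _ _ hl2 hl1.
rewrite f0 f1 f2 f3 !scale0r !scale1r !add0r !addr0 !scaleNr in r1 r2 rD r3.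
rewrite hz11 F0 in r1.
rewrite hz22 F0 in r2.
rewrite (hl12 K _ hbil) big_cons big_nil /= f1 scale1r addr0 in rD.
have r3' : (y21 * y12 - q *: (y22 * y11)) + q *: D = 0.
  have H : \sum_(u <- lam (q *: (z1 * z2) + z2 * z1)) phi i3 u.2 *: u.1 = 0.
    by rewrite addrC hz21 F0.
  rewrite (lamlin hll hbil) r3 (hl12 K _ hbil) big_cons big_nil /= f1 scale1r addr0 in H.
  by rewrite addrC.
have bS1 : bilin (fun a b : K => a * S b).
  split=> c a a' b; first by rewrite mulrDl -scalerAl.
  by rewrite hSl mulrDr -scalerAr.
have bS2 : bilin (fun a b : K => S a * b).
  split=> c a a' b; first by rewrite hSl mulrDl -scalerAl.
  by rewrite mulrDr -scalerAr.
have DD1 : D * S D = 1.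
  have := (hant D).2; rewrite (hDg K _ bS1) big_cons big_nil /= addr0 hDe.
  by rewrite scale1r.
have DD2 : S D * D = 1.
  have := (hant D).1; rewrite (hDg K _ bS2) big_cons big_nil /= addr0 hDe.
  by rewrite scale1r.
exists (S D); split; first by [].
set Di := S D.
have c11 : y11 * (y22 * Di) + y12 * (- (q *: (y21 * Di))) = 1.
  by rewrite mulrN -scalerAr !mulrA scalerAl -mulrBl -rD DD1.
have c21 : y21 * (y22 * Di) + y22 * (- (q *: (y21 * Di))) = 0.
  by rewrite mulrN -scalerAr !mulrA scalerAl -mulrBl -r2 mul0r.
have e1' : y11 * y12 = q *: (y12 * y11).
  by apply/eqP; rewrite -subr_eq0 -r1.
have e3' : y21 * y12 = q *: (y22 * y11) - q *: D.
  by apply/eqP; rewrite -subr_eq0 opprB addrA addrAC r3'.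
have c12 : y11 * (- (p *: (y12 * Di))) + y12 * (y11 * Di) = 0.
  by rewrite mulrN -scalerAr !mulrA e1' scalerAl scalerA pq scale1r addNr.
have c22 : y21 * (- (p *: (y12 * Di))) + y22 * (y11 * Di) = 1.
  rewrite mulrN -scalerAr !mulrA e3' -scalerBr scalerAl scalerA pq scale1r.
  by rewrite mulrBl opprB subrK DD1.
have k1 := row_col (esym t11) (esym t12) c11 c21.
have k2 := row_col (esym t21) (esym t22) c11 c21.
have k3 := row_col (esym t11) (esym t12) c12 c22.
have k4 := row_col (esym t21) (esym t22) c12 c22.
rewrite !mulr1 !mulr0 !mul1r !mul0r ?addr0 ?add0r in k1 k2 k3 k4.
by split.
Qed.
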